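(* Let $T_{i,j,k}$ be the solution of the $T$-system with the $2\times2$ periodic initial data $t_{i,j}$ ($t_{i,j}=a$ if $i,j$ even, $b$ if $i,j$ odd, $c$ if $i$ even and $j$ odd, $d$ if $i$ odd and $j$ even, with $a,b,c,d>0$). For $k\ge1$ and $i+j+k\equiv 0\pmod 2$ let $L_{i,j,k}=\frac{T_{i+1,j,k}T_{i-1,j,k}}{T_{i,j,k+1}T_{i,j,k-1}}$ and $R_{i,j,k}=1-L_{i,j,k}$. Then with $e_1=(2,0,0)$, $e_2=(0,2,0)$, $e_3=(1,1,2)$, $$L_{(i,j,k)+me_1+ne_2+pe_3}=L_{i,j,k},\qquad R_{(i,j,k)+me_1+ne_2+pe_3}=R_{i,j,k}$$ for all $m,n\in\mathbb{Z}$, $p\ge0$.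
   Context: The $T$-system is $T_{i,j,k+1}T_{i,j,k-1}=T_{i+1,j,k}T_{i-1,j,k}+T_{i,j+1,k}T_{i,j-1,k}$ for $k\ge1$, on points $(i,j,k)\in\mathbb{Z}^2\times\mathbb{Z}_{\ge0}$ with $i+j+k\equiv 1\pmod 2$, with initial data $T_{i,j,(i+j+1\bmod 2)}=t_{i,j}$. One has $R_{i,j,k}=\frac{T_{i,j+1,k}T_{i,j-1,k}}{T_{i,j,k+1}T_{i,j,k-1}}$ by the $T$-system. *)

(* Defs.v *)
From HB Require Import structures.
From mathcomp Require Import all_boot all_order all_algebra.
Set Implicit Arguments. Unset Strict Implicit. Unset Printing Implicit Defensive.
Import Order.TTheory GRing.Theory Num.Theory.
Local Open Scope ring_scope.

Definition zodd (z : int) : bool := odd (absz z).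

Definition tinit (R : Type) (a b c d : R) (i j : int) : R :=
  if zodd i then (if zodd j then b else d)
  else (if zodd j then c else a).

(* Tlayers t k = (layer k, layer k+1) of the T-system solution.
   Layer 0 and layer 1 are the initial data t (only the points with
   i+j+k odd are meaningful); layer k+2 is given by the T-system
   T_{i,j,k+2} = (T_{i+1,j,k+1}T_{i-1,j,k+1}+T_{i,j+1,k+1}T_{i,j-1,k+1})/T_{i,j,k}. *)
Fixpoint Tlayers (R : fieldType) (t : int -> int -> R) (k : nat)
  : (int -> int -> R) * (int -> int -> R) :=
  match k with
  | 0%N => (t, t)
  | k'.+1 =>
      let P := (Tlayers t k').1 in
      let Q := (Tlayers t k').2 in
      (Q, fun i j => (Q (i + 1) j * Q (i - 1) j + Q i (j + 1) * Q i (j - 1)) / P i j)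
  end.

Definition Tsys (R : fieldType) (t : int -> int -> R) (i j : int) (k : nat) : R :=
  (Tlayers t k).1 i j.

Definition Lsys (R : fieldType) (t : int -> int -> R) (i j : int) (k : nat) : R :=
  Tsys t (i + 1) j k * Tsys t (i - 1) j k / (Tsys t i j k.+1 * Tsys t i j k.-1).

Definition Rsys (R : fieldType) (t : int -> int -> R) (i j : int) (k : nat) : R :=
  1 - Lsys t i j k.

(* Main.v *)
Require Import Defs.
From HB Require Import structures.
From mathcomp Require Import all_boot all_order all_algebra.
From mathcomp Require Import zify ring lra.
Import Order.TTheory GRing.Theory Num.Theory.
Local Open Scope ring_scope.

Lemma zoddD (x y : int) : zodd (x + y) = zodd x (+) zodd y.
Proof.
rewrite /zodd.
case: (boolP (odd (absz x))); case: (boolP (odd (absz y)));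
  case: (boolP (odd (absz (x+y)))); simpl; lia.
Qed.

Lemma zodd1 : zodd 1 = true. Proof. by []. Qed.
Lemma zoddN1 : zodd (-1) = true. Proof. by []. Qed.
Lemma zodd2 (m : int) : zodd (2 * m) = false.
Proof. rewrite /zodd; case: (boolP (odd (absz (2 * m)))) => //; lia. Qed.
Lemma zoddn (k : nat) : zodd (k%:Z) = odd k. Proof. by []. Qed.

Fixpoint UV {R : fieldType} (a b c d : R) (k : nat) : (R * R) * (R * R) :=
  match k with
  | 0%N => ((c, d), (a, b))
  | k'.+1 => let: ((u0, v0), (u1, v1)) := UV a b c d k' in
      ((u1, v1), ((u1 ^+ 2 + v1 ^+ 2) / u0, (u1 ^+ 2 + v1 ^+ 2) / v0))
  end.

Definition sel {R : Type} (i : int) (p : R * R) := if zodd i then p.2 else p.1.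

Lemma key (R : fieldType) (a b c d : R) (k : nat) (i j : int) :
  (zodd (i + j + k%:Z) -> (Tlayers (tinit a b c d) k).1 i j = sel i (UV a b c d k).1) /\
  (~~ zodd (i + j + k%:Z) -> (Tlayers (tinit a b c d) k).2 i j = sel i (UV a b c d k).2).
Proof.
elim: k i j => [|k IH] i j.
  rewrite /= /tinit /sel /= addr0 zoddD.
  by split; case: (zodd i); case: (zodd j).
have E : (k.+1)%:Z = k%:Z + 1 by rewrite -addn1 PoszD.
rewrite E /=.
case: (UV a b c d k) (IH) => [[u0 v0] [u1 v1]] IH' /=.
split.
  move=> H; apply: (proj2 (IH' i j)).
  by move: H; rewrite !zoddD zodd1; case: (zodd i); case: (zodd j); case: (zodd k%:Z).
move=> H.
have H0 : zodd (i + j + k%:Z) by move: H; rewrite !zoddD zodd1; case: (zodd i); case: (zodd j); case: (zodd k%:Z).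
rewrite (proj1 (IH' i j) H0).
have P : forall i' j', zodd (i' + j' + k%:Z) = ~~ zodd (i + j + k%:Z) ->
   (Tlayers (tinit a b c d) k).2 i' j' = sel i' (u1, v1).
  by move=> i' j' Hp; apply: (proj2 (IH' i' j')); rewrite Hp H0.
rewrite !P; first last.
- by rewrite !zoddD ?zodd1 ?zoddN1; case: (zodd i); case: (zodd j); case: (zodd k%:Z).
- by rewrite !zoddD ?zodd1 ?zoddN1; case: (zodd i); case: (zodd j); case: (zodd k%:Z).
- by rewrite !zoddD ?zodd1 ?zoddN1; case: (zodd i); case: (zodd j); case: (zodd k%:Z).
- by rewrite !zoddD ?zodd1 ?zoddN1; case: (zodd i); case: (zodd j); case: (zodd k%:Z).
rewrite /sel /= !zoddD ?zodd1 ?zoddN1.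
by case: (zodd i) => /=; congr (_ / _); rewrite !expr2 addrC.
Qed.

Lemma UVpos (R : realFieldType) (a b c d : R) (ha : 0 < a) (hb : 0 < b) (hc : 0 < c) (hd : 0 < d) k :
  [/\ 0 < (UV a b c d k).1.1, 0 < (UV a b c d k).1.2, 0 < (UV a b c d k).2.1 & 0 < (UV a b c d k).2.2].
Proof.
elim: k => [|k IH] /=; first by split.
case: (UV a b c d k) IH => [[u0 v0] [u1 v1]] /= [h0 h1 h2 h3].
have hs : 0 < u1 ^+ 2 + v1 ^+ 2 by rewrite addr_gt0 // exprn_gt0.
by split => //; apply: divr_gt0.
Qed.

Definition gL {R : fieldType} (bit : bool) (p : R * R) :=
  (if bit then p.1 ^+ 2 else p.2 ^+ 2) / (p.1 ^+ 2 + p.2 ^+ 2).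

Lemma Lformula (R : realFieldType) (a b c d : R) (ha : 0 < a) (hb : 0 < b) (hc : 0 < c) (hd : 0 < d)
  (i j : int) (k : nat) (hpar : ~~ zodd (i + j + k.+1%:Z)) :
  Lsys (tinit a b c d) i j k.+1 = gL (zodd i) (UV a b c d k).2.
Proof.
have E : (k.+1)%:Z = k%:Z + 1 by rewrite -addn1 PoszD.
have H0 : zodd (i + j + k%:Z) by move: hpar; rewrite E !zoddD zodd1; case: (zodd i); case: (zodd j); case: (zodd k%:Z).
rewrite /Lsys /Tsys /=.
have P : forall i' j', zodd (i' + j' + k%:Z) = ~~ zodd (i + j + k%:Z) ->
   (Tlayers (tinit a b c d) k).2 i' j' = sel i' (UV a b c d k).2.
  by move=> i' j' Hp; apply: (proj2 (key R a b c d k i' j')); rewrite Hp H0.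
rewrite !P; first last.
- by rewrite !zoddD ?zodd1 ?zoddN1; case: (zodd i); case: (zodd j); case: (zodd k%:Z).
- by rewrite !zoddD ?zodd1 ?zoddN1; case: (zodd i); case: (zodd j); case: (zodd k%:Z).
- by rewrite !zoddD ?zodd1 ?zoddN1; case: (zodd i); case: (zodd j); case: (zodd k%:Z).
- by rewrite !zoddD ?zodd1 ?zoddN1; case: (zodd i); case: (zodd j); case: (zodd k%:Z).
rewrite (proj1 (key R a b c d k i j) H0).
have := UVpos R a b c d ha hb hc hd k.
case: (UV a b c d k) => [[u0 v0] [u1 v1]] /= [h0 h1 h2 h3].
have hs : 0 < u1 ^+ 2 + v1 ^+ 2 by rewrite addr_gt0 // exprn_gt0.
rewrite /sel /gL /= !zoddD ?zodd1 ?zoddN1.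
case: (zodd i) => /=.
  field; apply/andP; split; rewrite lt0r_neq0 //.
field; apply/andP; split; rewrite lt0r_neq0 //.
Qed.

Lemma gL_step (R : realFieldType) (a b c d : R) (ha : 0 < a) (hb : 0 < b) (hc : 0 < c) (hd : 0 < d)
  (bit : bool) (k : nat) :
  gL (~~ bit) (UV a b c d k.+2).2 = gL bit (UV a b c d k).2.
Proof.
have := UVpos R a b c d ha hb hc hd k.
rewrite /=.
case: (UV a b c d k) => [[u0 v0] [u1 v1]] /= [h0 h1 h2 h3].
have hs : 0 < u1 ^+ 2 + v1 ^+ 2 by rewrite addr_gt0 // exprn_gt0.
have hS : 0 < ((u1 ^+ 2 + v1 ^+ 2) / u0) ^+ 2 + ((u1 ^+ 2 + v1 ^+ 2) / v0) ^+ 2.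
  by rewrite addr_gt0 // exprn_gt0 // divr_gt0.
rewrite /gL /=.
move: hS; set S := (_ + _ ^+ 2) => hS.
have nS : S != 0 by rewrite lt0r_neq0.
have n1 : u1 != 0 by rewrite lt0r_neq0.
have n2 : v1 != 0 by rewrite lt0r_neq0.
have ns : u1 ^+ 2 + v1 ^+ 2 != 0 by rewrite lt0r_neq0.
case: bit => /=.
  rewrite !expr2; field; rewrite -!expr2 ?nS ?n1 ?n2 ?ns //=.
  by rewrite -mulrDr mulf_neq0 // ?expf_neq0 // addrC.
rewrite !expr2; field; rewrite -!expr2 ?nS ?n1 ?n2 ?ns //=.
by rewrite -mulrDr mulf_neq0 // ?expf_neq0 // addrC.
Qed.

Lemma gL_iter (R : realFieldType) (a b c d : R) (ha : 0 < a) (hb : 0 < b) (hc : 0 < c) (hd : 0 < d)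
  (bit : bool) (k p : nat) :
  gL (bit (+) odd p) (UV a b c d (k + 2 * p)%N).2 = gL bit (UV a b c d k).2.
Proof.
elim: p => [|p IH]; first by rewrite addbF muln0 addn0.
have -> : (k + 2 * p.+1 = (k + 2 * p).+2)%N by lia.
have -> : bit (+) odd p.+1 = ~~ (bit (+) odd p) by rewrite /= addbN.
by rewrite gL_step.
Qed.

Theorem mainTheorem4 (R : realFieldType) (a b c d : R)
  (ha : 0 < a) (hb : 0 < b) (hc : 0 < c) (hd : 0 < d)
  (i j : int) (k : nat) (hk : (1 <= k)%N) (hpar : ~~ zodd (i + j + k%:Z))
  (m n : int) (p : nat) :
  let t := tinit a b c d in
  Lsys t (i + 2 * m + p%:Z) (j + 2 * n + p%:Z) (k + 2 * p)%N = Lsys t i j k /\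
  Rsys t (i + 2 * m + p%:Z) (j + 2 * n + p%:Z) (k + 2 * p)%N = Rsys t i j k.
Proof.
move=> t.
have HL : Lsys t (i + 2 * m + p%:Z) (j + 2 * n + p%:Z) (k + 2 * p)%N = Lsys t i j k.
  case: k hk hpar => [//|k] _ hpar.
  have -> : (k.+1 + 2 * p = (k + 2 * p).+1)%N by lia.
  rewrite /t (Lformula R a b c d ha hb hc hd i j k hpar).
  rewrite (Lformula R a b c d ha hb hc hd); last first.
    have -> : ((k + 2 * p).+1)%:Z = k.+1%:Z + 2 * p%:Z.
      by rewrite -PoszD; congr Posz; lia.
    have -> : i + 2 * m + p%:Z + (j + 2 * n + p%:Z) + (k.+1%:Z + 2 * p%:Z)
       = (i + j + k.+1%:Z) + 2 * (m + n + p%:Z + p%:Z) by ring.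
    by rewrite zoddD zodd2 addbF.
  by rewrite !zoddD zodd2 addbF zoddn gL_iter.
split => //.
by rewrite /Rsys HL.
Qed.
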